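(* Let $\mathcal{H}$ be a symmetric and complete hypothesis set of functions $\mathcal{X}\times\overline{\mathcal{Y}}\to\mathbb{R}$, let $c\colon\mathcal{X}\times\mathcal{Y}\to[0,1]$ be any cost function, and let $\Psi(t)=1-t$. Then for all $h\in\mathcal{H}$ and any distribution on $\mathcal{X}\times\mathcal{Y}$, $$\mathcal{E}_{\mathsf{L}_{\mathrm{def}}}(h)-\mathcal{E}^*_{\mathsf{L}_{\mathrm{def}}}(\mathcal{H})+\mathcal{M}_{\mathsf{L}_{\mathrm{def}}}(\mathcal{H})\le (n+1)\big(\mathcal{E}_{\mathsf{L}_{\mathrm{RL2D}}}(h)-\mathcal{E}^*_{\mathsf{L}_{\mathrm{RL2D}}}(\mathcal{H})+\mathcal{M}_{\mathsf{L}_{\mathrm{RL2D}}}(\mathcal{H})\big).$$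
   Context: Learning to defer. $\mathcal{X}$ is an input space, $\mathcal{Y}=[n]$, $\overline{\mathcal{Y}}=\{1,\dots,n+1\}$ with $n+1$ meaning ''defer''. For $h\colon\mathcal{X}\times\overline{\mathcal{Y}}\to\mathbb{R}$, $\mathsf{h}(x)=\operatorname{argmax}_{y\in\overline{\mathcal{Y}}}h(x,y)$ with a fixed deterministic tie-breaking rule. Given a cost $c\colon\mathcal{X}\times\mathcal{Y}\to[0,1]$, the deferral loss is $\mathsf{L}_{\mathrm{def}}(h,x,y)=1_{\mathsf{h}(x)\neq y}1_{\mathsf{h}(x)\in[n]}+c(x,y)1_{\mathsf{h}(x)=n+1}$, and for $\Psi\colon[0,1]\to\mathbb{R}_+\cup\{+\infty\}$ non-increasing the surrogate is $\mathsf{L}_{\mathrm{RL2D}}(h,x,y)=c(x,y)\Psi\big(\frac{e^{h(x,y)}}{\sum_{y'\in\overline{\mathcal{Y}}}e^{h(x,y')}}\big)+(1-c(x,y))\Psi\big(\frac{e^{h(x,y)}+e^{h(x,n+1)}}{\sum_{y'\in\overline{\mathcal{Y}}}e^{h(x,y')}}\big)$. For a loss $\mathsf{L}$: $\mathcal{E}_{\mathsf{L}}(h)=\mathbb{E}_{(x,y)}[\mathsf{L}(h,x,y)]$, $\mathcal{E}^*_{\mathsf{L}}(\mathcal{H})=\inf_{h\in\mathcal{H}}\mathcal{E}_{\mathsf{L}}(h)$, $\mathcal{M}_{\mathsf{L}}(\mathcal{H})=\mathcal{E}^*_{\mathsf{L}}(\mathcal{H})-\mathbb{E}_x[\inf_{h\in\mathcal{H}}\mathbb{E}_{y\mid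 x}[\mathsf{L}(h,x,y)]]$. $\mathcal{H}$ is symmetric if there is a family $\mathcal{F}$ of functions $\mathcal{X}\to\mathbb{R}$ with $\{[h(x,1),\dots,h(x,n+1)]:h\in\mathcal{H}\}=\{[f_1(x),\dots,f_{n+1}(x)]:f_i\in\mathcal{F}\}$ for every $x$; $\mathcal{H}$ is complete if $\{h(x,y):h\in\mathcal{H}\}=\mathbb{R}$ for every $(x,y)\in\mathcal{X}\times\mathcal{Y}$. *)

(* Defs.v *)
From HB Require Import structures.
From mathcomp Require Import all_boot all_order all_algebra.
From mathcomp Require Import all_classical all_reals all_analysis.
Set Implicit Arguments. Unset Strict Implicit. Unset Printing Implicit Defensive.
Import Order.TTheory GRing.Theory Num.Theory.
Local Open Scope ring_scope.
Local Open Scope classical_set_scope.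

Section Defer.
Variables (R : realType) (X : Type) (n : nat).

(* Labels Y = [n] are 'I_n (0-indexed); extended labels Ybar = 'I_n.+1,
   the last index ord_max (value n) meaning "defer". *)
Definition lab (y : 'I_n) : 'I_n.+1 := widen_ord (leqnSn n) y.
Definition defer : 'I_n.+1 := ord_max.

Definition hpred (h : X -> 'I_n.+1 -> R) (x : X) : 'I_n.+1 :=
  [arg max_(i > ord0) h x i]%O.

Definition L_def (c : X -> 'I_n -> R) (h : X -> 'I_n.+1 -> R) (x : X) (y : 'I_n) : R :=
  ((hpred h x != lab y) && (hpred h x != defer))%:R
  + c x y * (hpred h x == defer)%:R.

Definition softmax (h : X -> 'I_n.+1 -> R) (x : X) (i : 'I_n.+1) : R :=
  expR (h x i) / \sum_(j < n.+1) expR (h x j).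

Definition L_RL2D (Psi : R -> R) (c : X -> 'I_n -> R) (h : X -> 'I_n.+1 -> R)
    (x : X) (y : 'I_n) : R :=
  c x y * Psi (softmax h x (lab y))
  + (1 - c x y) * Psi ((expR (h x (lab y)) + expR (h x defer))
                        / \sum_(j < n.+1) expR (h x j)).

Definition symmetric_hyp (H : set (X -> 'I_n.+1 -> R)) : Prop :=
  exists F : set (X -> R), forall x : X,
    [set h x | h in H] =
    [set v : 'I_n.+1 -> R | exists f : 'I_n.+1 -> X -> R,
        (forall i, F (f i)) /\ v = (fun i => f i x)].

Definition complete_hyp (H : set (X -> 'I_n.+1 -> R)) : Prop :=
  forall (x : X) (y : 'I_n), [set h x (lab y) | h in H] = setT.

End Defer.

Section Risks.
Local Open Scope ereal_scope.
Variables (d : measure_display) (X : measurableType d) (R : realType) (n : nat).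
(* The distribution on X * Y is given by its marginal mu on X and the
   conditional distribution eta x of y given x (finite Y). *)
Variables (mu : probability X R) (eta : X -> 'I_n -> R).

Definition cond_risk (L : (X -> 'I_n.+1 -> R) -> X -> 'I_n -> R)
    (h : X -> 'I_n.+1 -> R) (x : X) : R :=
  (\sum_(y < n) eta x y * L h x y)%R.

Definition risk L h : \bar R := \int[mu]_x (cond_risk L h x)%:E.

Definition best_risk L (H : set (X -> 'I_n.+1 -> R)) : \bar R :=
  ereal_inf [set risk L h | h in H].

Definition min_gap L (H : set (X -> 'I_n.+1 -> R)) : \bar R :=
  best_risk L H
  - \int[mu]_x ereal_inf [set (cond_risk L h x)%:E | h in H].
End Risks.

(* Main.v *)
Require Import Defs.
From HB Require Import structures.
From mathcomp Require Import all_boot all_order all_algebra.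
From mathcomp Require Import all_classical all_reals all_analysis.
From mathcomp Require Import ring lra.
Import Order.TTheory GRing.Theory Num.Theory.
Local Open Scope ring_scope.
Local Open Scope classical_set_scope.
Set Implicit Arguments. Unset Strict Implicit.

Section Alg.
Variables (R : realType) (X : Type) (n : nat) (c : X -> 'I_n -> R) (eta : X -> 'I_n -> R).

Implicit Types (g : X -> 'I_n.+1 -> R) (x : X).

Definition qq x := \sum_(y < n) eta x y * (1 - c x y).
Definition vv x (i : 'I_n.+1) : R :=
  if unlift (defer n) i is Some k then eta x k else qq x.
Definition MM x : R := \big[Num.max/0]_(i < n.+1) vv x i.

Lemma lab_lift (k : 'I_n) : lab k = lift (defer n) k.
Proof. by apply: val_inj => /=; rewrite /bump leqNgt ltn_ord. Qed.

Lemma vv_lab x k : vv x (lab k) = eta x k.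
Proof. by rewrite /vv lab_lift liftK. Qed.

Lemma vv_defer x : vv x (defer n) = qq x.
Proof. by rewrite /vv unlift_none. Qed.

Lemma ord_cases (i : 'I_n.+1) : i = defer n \/ exists k, i = lab k.
Proof.
case: (unliftP (defer n) i) => [k ->|->]; last by left.
by right; exists k; rewrite lab_lift.
Qed.

Lemma lab_neq_defer (k : 'I_n) : (lab k == defer n) = false.
Proof. by rewrite -val_eqE /= ltn_eqF. Qed.

Lemma lab_eq (k y : 'I_n) : (lab k == lab y) = (k == y).
Proof. by rewrite -val_eqE /= val_eqE. Qed.

Hypothesis Hc : forall x y, 0 <= c x y <= 1.
Hypothesis He : forall x y, 0 <= eta x y.
Hypothesis Hs : forall x, \sum_(y < n) eta x y = 1.

Lemma npos (x : X) : (0 < n)%N.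
Proof.
rewrite lt0n; apply/negP => /eqP n0.
have := Hs x; rewrite big1 => [/eqP|]; first by rewrite eq_sym oner_eq0.
by move=> [i hi] _; exfalso; move: hi; rewrite n0.
Qed.

Lemma qq_ge0 x : 0 <= qq x.
Proof.
apply: sumr_ge0 => y _; have := Hc x y; have := He x y; move=> /= h1 /andP[h2 h3]; nra.
Qed.

Lemma qq_le1 x : qq x <= 1.
Proof.
rewrite -(Hs x); apply: ler_sum => y _.
have := Hc x y; have := He x y; move=> /= h1 /andP[h2 h3]; nra.
Qed.

Lemma eta_le1 x k : eta x k <= 1.
Proof.
rewrite -(Hs x) (bigD1 k) //= lerDl; exact: sumr_ge0.
Qed.

Lemma vv_ge0 x i : 0 <= vv x i.
Proof. by case: (ord_cases i) => [->|[k ->]]; rewrite ?vv_defer ?vv_lab ?qq_ge0. Qed.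

Lemma vv_le1 x i : vv x i <= 1.
Proof. by case: (ord_cases i) => [->|[k ->]]; rewrite ?vv_defer ?vv_lab ?qq_le1 ?eta_le1. Qed.

Lemma vv_leMM x i : vv x i <= MM x.
Proof. exact: le_bigmax. Qed.

Lemma MM_arg x : exists p, MM x = vv x p.
Proof.
by exists [arg max_(i > ord0) vv x i]%O; rewrite /MM (bigmax_eq_arg _ ord0) // => i _; exact: vv_ge0.
Qed.

Lemma MM_ge0 x : 0 <= MM x.
Proof. have [p ->] := MM_arg x; exact: vv_ge0. Qed.

Lemma MM_le1 x : MM x <= 1.
Proof. have [p ->] := MM_arg x; exact: vv_le1. Qed.


Lemma sumexp_gt0 (g : X -> 'I_n.+1 -> R) x : 0 < \sum_(j < n.+1) expR (g x j).
Proof.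
rewrite (bigD1 ord0) //=; apply: lt_le_trans (expR_gt0 (g x ord0)) _.
rewrite lerDl; apply: sumr_ge0 => j _; exact: expR_ge0.
Qed.

Lemma sm_gt0 g x i : 0 < softmax g x i.
Proof. by rewrite /softmax divr_gt0 ?expR_gt0 ?sumexp_gt0. Qed.

Lemma sm_sum g x : \sum_(i < n.+1) softmax g x i = 1.
Proof.
rewrite /softmax -mulr_suml divff //; exact: lt0r_neq0 (sumexp_gt0 g x).
Qed.

Lemma sm_le g x i j : g x i <= g x j -> softmax g x i <= softmax g x j.
Proof.
move=> hij; rewrite /softmax ler_pM2r ?invr_gt0 ?sumexp_gt0 //.
by rewrite ler_expR.
Qed.

Lemma conddef_eq g x :
  \sum_(y < n) eta x y * L_def c g x y = 1 - vv x (hpred g x).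
Proof.
rewrite /L_def; case: (ord_cases (hpred g x)) => [->|[k ->]].
  under eq_bigr => y _ do rewrite eqxx andbF mulr1 add0r.
  rewrite vv_defer /qq -[X in X - _](Hs x) -sumrB; apply: eq_bigr => y _.
  ring.
rewrite vv_lab lab_neq_defer.
under eq_bigr => y _ do rewrite mulr0 addr0 andbT lab_eq.
rewrite -[X in X - _](Hs x) (bigD1 k) //= [X in _ = X - _](bigD1 k) //= eqxx mulr0 add0r.
rewrite addrAC subrr add0r; apply: eq_bigr => y hy.
by rewrite eq_sym hy mulr1.
Qed.

Lemma condRL_eq g x :
  \sum_(y < n) eta x y * L_RL2D (fun t : R => 1 - t) c g x y
  = 1 - \sum_(i < n.+1) vv x i * softmax g x i.
Proof.
rewrite big_ord_recr /=.
under [X in _ = 1 - (X + _)]eq_bigr => k _ do rewrite vv_lab.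
rewrite (vv_defer x) -[in RHS](Hs x) /qq mulr_suml opprD addrA -sumrB -sumrB.
apply: eq_bigr => y _; rewrite /L_RL2D /softmax /lab /defer; ring.
Qed.

Lemma key_ineq (v s : 'I_n.+1 -> R) (M : R) (p : 'I_n.+1) :
  (forall i, v i <= M) -> (forall i, 0 <= s i) -> \sum_i s i = 1 ->
  (forall i, s i <= s p) ->
  M - v p <= n.+1%:R * (M - \sum_i v i * s i).
Proof.
move=> hv hs hsum hp.
have h1 : \sum_i v i * s i <= v p * s p + M * (1 - s p).
  rewrite (bigD1 p) //= lerD2l -hsum [X in M * (X - _)](bigD1 p) //= addrAC subrr add0r mulr_sumr.
  by apply: ler_sum => i _; apply: ler_wpM2r.
have h2 : 1 <= n.+1%:R * s p.
  rewrite -[X in X <= _]hsum; apply: le_trans (ler_sum _ (fun i _ => hp i)) _.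
  by rewrite sumr_const card_ord mulr_natl.
have h3 := hv p; have h4 := hs p.
have hN : 0 <= n.+1%:R :> R by [].
nra.
Qed.

End Alg.

Section Reach.
Variables (R : realType) (X : Type) (n : nat).
Implicit Types (g : X -> 'I_n.+1 -> R) (x : X).

Lemma reach (H : set (X -> 'I_n.+1 -> R)) :
  symmetric_hyp H -> complete_hyp H -> (0 < n)%N ->
  forall x (w : 'I_n.+1 -> R), exists2 g, H g & g x = w.
Proof.
move=> [F hF] hC n0 x w.
pose y0 : 'I_n := Ordinal n0.
have hval : forall r : R, exists f, F f /\ f x = r.
  move=> r; have : [set h x (lab y0) | h in H] r by rewrite hC.
  case=> g Hg gr.
  have : [set h x | h in H] (g x) by exists g.
  rewrite hF => -[f [Ff gf]].
  exists (f (lab y0)); split => //; by rewrite -gr gf.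
have [ff Hff] := choice (fun i => hval (w i)).
have : [set v : 'I_n.+1 -> R | exists f : 'I_n.+1 -> X -> R,
        (forall i, F (f i)) /\ v = (fun i => f i x)] w.
  exists ff; split; first by move=> i; exact: (Hff i).1.
  by apply/funext => i; rewrite (Hff i).2.
rewrite -hF => -[g Hg gw]; by exists g.
Qed.

Lemma hpred_max g x j : g x j <= g x (hpred g x).
Proof. by rewrite /hpred; case: arg_maxP => //= i _ Hi; exact: Hi. Qed.

End Reach.


Section Inf.
Variables (R : realType) (X : Type) (n : nat) (c : X -> 'I_n -> R) (eta : X -> 'I_n -> R).
Variable (H : set (X -> 'I_n.+1 -> R)).
Implicit Types (g : X -> 'I_n.+1 -> R) (x : X).
Hypothesis hS : symmetric_hyp H.
Hypothesis hC : complete_hyp H.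
Hypothesis Hc : forall x y, 0 <= c x y <= 1.
Hypothesis He : forall x y, 0 <= eta x y.
Hypothesis Hs : forall x, \sum_(y < n) eta x y = 1.

Lemma inf_def x :
  ereal_inf [set (\sum_(y < n) eta x y * L_def c g x y)%:E | g in H]
  = (1 - MM c eta x)%:E.
Proof.
apply/le_anti/andP; split; last first.
  apply/ereal_infP => _ [g Hg <-]; rewrite lee_fin (conddef_eq c Hs).
  by rewrite lerB // vv_leMM.
have [p hp] := MM_arg Hc He x.
have [g Hg gx] := reach hS hC (npos Hs x) x (fun i => (i == p)%:R).
apply: ge_ereal_inf; exists (\sum_(y < n) eta x y * L_def c g x y)%:E.
  by exists g.
rewrite (conddef_eq c Hs) hp lee_fin.
have -> : hpred g x = p.
  have := hpred_max g x p; rewrite gx /= eqxx.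
  by case: eqP => // _; rewrite ler10.
by [].
Qed.

Lemma inf_RL x :
  ereal_inf [set (\sum_(y < n) eta x y * L_RL2D (fun t : R => 1 - t) c g x y)%:E | g in H]
  = (1 - MM c eta x)%:E.
Proof.
apply/le_anti/andP; split; last first.
  apply/ereal_infP => _ [g Hg <-]; rewrite lee_fin (condRL_eq c Hs).
  rewrite lerB // -[X in _ <= X]mulr1 -(sm_sum g x) mulr_sumr.
  by apply: ler_sum => i _; apply: ler_wpM2r; [exact/ltW/sm_gt0 | exact: vv_leMM].
have [p hp] := MM_arg Hc He x.
have n0 := npos Hs x.
apply/lee_addgt0Pr => e e0.
pose t := n%:R / e.
have [g Hg gx] := reach hS hC n0 x (fun i => if i == p then t else 0).
apply: ge_ereal_inf; exists (\sum_(y < n) eta x y * L_RL2D (fun t : R => 1 - t) c g x y)%:E.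
  by exists g.
rewrite (condRL_eq c Hs) -EFinD lee_fin.
have hSum : \sum_(j < n.+1) expR (g x j) = expR t + n%:R.
  rewrite gx (bigD1 p) //= eqxx; congr (_ + _).
  under eq_bigr => j hj do rewrite (negbTE hj) expR0.
  by rewrite (sumr_const (predC1 p)) cardC1 card_ord /=.
have hsp : softmax g x p = expR t / (expR t + n%:R).
  by rewrite /softmax hSum gx /= eqxx.
have hA : vv c eta x p * softmax g x p <= \sum_i vv c eta x i * softmax g x i.
  rewrite (bigD1 p) //= lerDl; apply: sumr_ge0 => i _.
  by rewrite mulr_ge0 ?(vv_ge0 Hc He) // ltW // sm_gt0.
have hE : 1 + t <= expR t by exact: expR_ge1Dx.
have het : e * t = n%:R by rewrite /t mulrC divfK // gt_eqF.
have hn : 0 <= n%:R :> R by [].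
have hEpos : 0 < expR t + n%:R by rewrite ltr_wpDr // expR_gt0.
have hD : 1 - softmax g x p <= e.
  have -> : 1 - softmax g x p = n%:R / (expR t + n%:R).
    by rewrite hsp; field; rewrite gt_eqF.
  by rewrite ler_pdivrMr //; nra.
have hsp1 : softmax g x p <= 1.
  by rewrite hsp ler_pdivrMr // mul1r lerDl.
have hM0 := MM_ge0 Hc He x; have hM1 := MM_le1 Hc He Hs x.
rewrite -hp in hA.
nra.
Qed.

End Inf.

Section Meas.
Variables (d : measure_display) (X : measurableType d) (R : realType) (n : nat).
Variables (c eta : X -> 'I_n -> R) (h : X -> 'I_n.+1 -> R).
Hypothesis mc : forall y, measurable_fun setT (fun x => c x y).
Hypothesis meta : forall y, measurable_fun setT (fun x => eta x y).
Hypothesis mh : forall i, measurable_fun setT (fun x => h x i).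

Lemma mhas (T : Type) (s : seq T) (P : T -> X -> bool) :
  (forall t, measurable_fun setT (P t)) ->
  measurable_fun setT (fun x => has (fun t => P t x) s).
Proof.
move=> mP; elim: s => [|t s IH] /=; first exact: measurable_cst.
exact: measurable_or.
Qed.

Lemma mall (T : Type) (s : seq T) (P : T -> X -> bool) :
  (forall t, measurable_fun setT (P t)) ->
  measurable_fun setT (fun x => all (fun t => P t x) s).
Proof.
move=> mP; elim: s => [|t s IH] /=; first exact: measurable_cst.
exact: measurable_and.
Qed.

Definition Phi (B : {ffun 'I_n.+1 * 'I_n.+1 -> bool}) : 'I_n.+1 :=
  odflt ord0 [pick i | [forall j, B (i, j)]].

Lemma hpredE x : hpred h x = Phi [ffun p => h x p.2 <= h x p.1].
Proof.
rewrite /hpred /Phi /Order.arg_max /extremum; congr odflt; apply: eq_pick => i /=.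
by apply: eq_forallb => j; rewrite ffunE.
Qed.

Lemma mhpred k : measurable_fun setT (fun x => hpred h x == k).
Proof.
have -> : (fun x => hpred h x == k) = (fun x => has (fun B => (Phi B == k) &&
    all (fun p => (h x p.2 <= h x p.1) == B p) (enum (@predT ('I_n.+1 * 'I_n.+1)%type)))
    (enum (@predT {ffun 'I_n.+1 * 'I_n.+1 -> bool}))).
  apply/funext => x; rewrite hpredE; apply/idP/hasP.
    move=> hk; exists [ffun p => h x p.2 <= h x p.1]; first by rewrite mem_enum.
    by rewrite hk /=; apply/allP => p _; rewrite ffunE.
  move=> [B _ /andP[/eqP <- /allP hB]].
  suff -> : [ffun p => h x p.2 <= h x p.1] = B by [].
  by apply/ffunP => p; rewrite ffunE; apply/eqP/hB; rewrite mem_enum.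
apply: mhas => B; apply: measurable_and; first exact: measurable_cst.
apply: mall => p; case: (B p).
  under eq_fun do rewrite eqb_id; exact: measurable_realfun.measurable_fun_ler.
under eq_fun do rewrite eqbF_neg; apply: measurable_neg; exact: measurable_realfun.measurable_fun_ler.
Qed.

End Meas.

Section Meas2.
Variables (d : measure_display) (X : measurableType d) (R : realType) (n : nat).
Variables (c eta : X -> 'I_n -> R) (h : X -> 'I_n.+1 -> R).
Hypothesis mc : forall y, measurable_fun setT (fun x => c x y).
Hypothesis meta : forall y, measurable_fun setT (fun x => eta x y).
Hypothesis mh : forall i, measurable_fun setT (fun x => h x i).

Lemma mqq : measurable_fun setT (qq c eta).
Proof.
rewrite /qq; apply: measurable_sum => y; apply: measurable_realfun.measurable_funM => //.
apply: measurable_realfun.measurable_funB => //; exact: measurable_cst.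
Qed.

Lemma mvv i : measurable_fun setT (fun x => vv c eta x i).
Proof. rewrite /vv; case: (unlift (defer n) i) => [k|] //; exact: mqq. Qed.

Lemma mMM : measurable_fun setT (MM c eta).
Proof.
rewrite /MM; elim: (index_enum _) => [|i s IH].
  under eq_fun do rewrite big_nil; exact: measurable_cst.
under eq_fun do rewrite big_cons; exact: measurable_realfun.measurable_maxr (mvv i) IH.
Qed.

Lemma mf1 : measurable_fun setT (fun x => 1 - vv c eta x (hpred h x)).
Proof.
have -> : (fun x => 1 - vv c eta x (hpred h x)) =
  (fun x => 1 - \sum_(k < n.+1) (if hpred h x == k then vv c eta x k else 0)).
  apply/funext => x; congr (_ - _); rewrite -big_mkcond /=.
  by rewrite (big_pred1 (hpred h x)) // => k; rewrite eq_sym.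
apply: measurable_realfun.measurable_funB; first exact: measurable_cst.
apply: measurable_sum => k; apply: measurable_fun_ifT.
- exact: mhpred.
- exact: mvv.
- exact: measurable_cst.
Qed.

Lemma msm i : measurable_fun setT (fun x => softmax h x i).
Proof.
have mS : measurable_fun setT (fun x => \sum_(j < n.+1) expR (h x j)).
  by apply: measurable_sum => j; apply: measurableT_comp => //; exact: mh.
have -> : (fun x => softmax h x i) =
    (fun x => expR (h x i) * expR (- ln (\sum_(j < n.+1) expR (h x j)))).
  apply/funext => x; rewrite /softmax expRN lnK //.
  by rewrite posrE sumexp_gt0.
apply: measurable_realfun.measurable_funM; first by apply: measurableT_comp => //; exact: mh.
apply: measurableT_comp => //; apply: measurable_realfun.measurable_funN.
by apply: measurableT_comp => //; exact: measurable_realfun.measurable_ln.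
Qed.

Lemma mf2 : measurable_fun setT (fun x => 1 - \sum_(i < n.+1) vv c eta x i * softmax h x i).
Proof.
apply: measurable_realfun.measurable_funB; first exact: measurable_cst.
apply: measurable_sum => i; apply: measurable_realfun.measurable_funM; [exact: mvv | exact: msm].
Qed.

End Meas2.

Unset Implicit Arguments.

Lemma bnd_integrable (d : measure_display) (X : measurableType d) (R : realType)
  (mu : probability X R) (f : X -> R) (K : R) :
  measurable_fun setT f -> (forall x, `|f x| <= K) -> mu.-integrable setT (EFin \o f).
Proof.
move=> mf hK; apply: measurable_bounded_integrable => //.
  by have := probability_setT mu; rewrite /= => ->; rewrite ltry.
exists K; split; first exact: num_real.
move=> M hM x _; exact: le_trans (hK x) (ltW hM).
Qed.

Theorem theorem3 (d : measure_display) (X : measurableType d) (R : realType)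
    (n : nat) (H : set (X -> 'I_n.+1 -> R)) (c : X -> 'I_n -> R)
    (mu : probability X R) (eta : X -> 'I_n -> R) (h : X -> 'I_n.+1 -> R) :
  symmetric_hyp H -> complete_hyp H ->
  (forall x y, 0 <= c x y <= 1) ->
  (forall y, measurable_fun setT (fun x => c x y)) ->
  (forall x y, 0 <= eta x y) -> (forall x, \sum_(y < n) eta x y = 1) ->
  (forall y, measurable_fun setT (fun x => eta x y)) ->
  (forall g, H g -> forall i, measurable_fun setT (fun x => g x i)) ->
  H h ->
  (risk mu eta (L_def c) h - best_risk mu eta (L_def c) H
     + min_gap mu eta (L_def c) H <=
   (n.+1)%:R%:E * (risk mu eta (L_RL2D (fun t : R => 1 - t)%R c) h
     - best_risk mu eta (L_RL2D (fun t : R => 1 - t)%R c) H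
     + min_gap mu eta (L_RL2D (fun t : R => 1 - t)%R c) H))%E.
Proof.
move=> hS hC Hc mc He Hs meta mH Hh.
have mh := mH h Hh.
pose f1 := fun x => 1 - vv c eta x (hpred h x).
pose f2 := fun x => 1 - \sum_(i < n.+1) vv c eta x i * softmax h x i.
pose a := fun x => 1 - MM c eta x.
have mf1' : measurable_fun setT f1 by exact: mf1.
have mf2' : measurable_fun setT f2 by exact: mf2.
have ma : measurable_fun setT a.
  by apply: measurable_realfun.measurable_funB; [exact: measurable_cst | exact: mMM].
have f1b x : 0 <= f1 x <= 1.
  by rewrite /f1 subr_ge0 vv_le1 //= lerBlDr lerDl (vv_ge0 Hc He).
have ab x : 0 <= a x <= 1.
  by rewrite /a subr_ge0 (MM_le1 Hc He Hs) //= lerBlDr lerDl (MM_ge0 Hc He).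
have f2b x : 0 <= f2 x <= 1.
  rewrite /f2 subr_ge0 lerBlDr lerDl; apply/andP; split.
    rewrite -(sm_sum h x); apply: ler_sum => i _.
    by rewrite ler_piMl ?vv_le1 // ltW // sm_gt0.
  by apply: sumr_ge0 => i _; rewrite mulr_ge0 ?(vv_ge0 Hc He) // ltW // sm_gt0.
have intg (f : X -> R) : measurable_fun setT f -> (forall x, 0 <= f x <= 1) ->
    mu.-integrable setT (EFin \o f).
  move=> mf hf; apply: (@bnd_integrable _ _ _ mu f 1) => // x.
  by have /andP[h0 h1] := hf x; rewrite ger0_norm.
have i1 := intg _ mf1' f1b; have i2 := intg _ mf2' f2b; have ia := intg _ ma ab.
have eint (f : X -> R) : mu.-integrable setT (EFin \o f) ->
    (\int[mu]_x (f x)%:E)%E = (Rintegral mu setT f)%:E.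
  by move=> fi; rewrite /Rintegral fineK // (integrable_fin_num _ fi).
have e1 : risk mu eta (L_def c) h = (Rintegral mu setT f1)%:E.
  rewrite /risk -eint //; apply: eq_integral => x _.
  by rewrite /cond_risk (conddef_eq c Hs).
have e2 : risk mu eta (L_RL2D (fun t : R => 1 - t)%R c) h = (Rintegral mu setT f2)%:E.
  rewrite /risk -eint //; apply: eq_integral => x _.
  by rewrite /cond_risk (condRL_eq c Hs).
have g1 : (\int[mu]_x ereal_inf [set (cond_risk eta (L_def c) g x)%:E | g in H])%E
    = (Rintegral mu setT a)%:E.
  rewrite -eint //; apply: eq_integral => x _.
  by rewrite /cond_risk (inf_def hS hC Hc He Hs).
have g2 : (\int[mu]_x ereal_inf [set (cond_risk eta (L_RL2D (fun t : R => 1 - t)%R c) g x)%:E | g in H])%E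
    = (Rintegral mu setT a)%:E.
  rewrite -eint //; apply: eq_integral => x _.
  by rewrite /cond_risk (inf_RL hS hC Hc He Hs).
have c1ge0 g x : 0 <= cond_risk eta (L_def c) g x.
  by rewrite /cond_risk (conddef_eq c Hs) subr_ge0 vv_le1.
have c2ge0 g x : 0 <= cond_risk eta (L_RL2D (fun t : R => 1 - t)%R c) g x.
  rewrite /cond_risk (condRL_eq c Hs) subr_ge0 -(sm_sum g x); apply: ler_sum => i _.
  by rewrite ler_piMl ?vv_le1 // ltW // sm_gt0.
have b1fin : best_risk mu eta (L_def c) H \is a fin_num.
  have h0 : (0 <= best_risk mu eta (L_def c) H)%E.
    apply/ereal_infP => _ [g Hg <-]; apply: integral_ge0 => x _.
    by rewrite lee_fin.
  rewrite (ge0_fin_numE h0); apply: (@le_lt_trans _ _ (risk mu eta (L_def c) h)).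
    by apply: ereal_inf_lbound; exists h.
  by rewrite e1 ltry.
have b2fin : best_risk mu eta (L_RL2D (fun t : R => 1 - t)%R c) H \is a fin_num.
  have h0 : (0 <= best_risk mu eta (L_RL2D (fun t : R => 1 - t)%R c) H)%E.
    apply/ereal_infP => _ [g Hg <-]; apply: integral_ge0 => x _.
    by rewrite lee_fin.
  rewrite (ge0_fin_numE h0); apply: (@le_lt_trans _ _ (risk mu eta (L_RL2D (fun t : R => 1 - t)%R c) h)).
    by apply: ereal_inf_lbound; exists h.
  by rewrite e2 ltry.
rewrite /min_gap g1 g2 e1 e2 -(fineK b1fin) -(fineK b2fin).
rewrite -!EFinB -!EFinD -EFinM lee_fin.
have key : Rintegral mu setT f1 - Rintegral mu setT a <=
    n.+1%:R * (Rintegral mu setT f2 - Rintegral mu setT a).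
  have m1a : measurable_fun setT (fun x => f1 x - a x).
    exact: measurable_realfun.measurable_funB.
  have m2a : measurable_fun setT (fun x => f2 x - a x).
    exact: measurable_realfun.measurable_funB.
  have i1a : mu.-integrable setT (EFin \o (fun x => f1 x - a x)).
    apply: (@bnd_integrable _ _ _ mu _ 1) => // x.
    have := f1b x; have := ab x; move=> /andP[? ?] /andP[? ?].
    rewrite ler_norml; apply/andP; split; lra.
  have i2a : mu.-integrable setT (EFin \o (fun x => f2 x - a x)).
    apply: (@bnd_integrable _ _ _ mu _ 1) => // x.
    have := f2b x; have := ab x; move=> /andP[? ?] /andP[? ?].
    rewrite ler_norml; apply/andP; split; lra.
  have i3a : mu.-integrable setT (EFin \o (fun x => n.+1%:R * (f2 x - a x))).
    apply: (@bnd_integrable _ _ _ mu _ n.+1%:R).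
      by apply: measurable_realfun.measurable_funM => //; exact: measurable_cst.
    move=> x; rewrite normrM ger0_norm // -[X in _ <= X]mulr1 ler_wpM2l //.
    have := f2b x; have := ab x; move=> /andP[? ?] /andP[? ?].
    rewrite ler_norml; apply/andP; split; lra.
  rewrite -RintegralB // -RintegralB // -RintegralZl //.
  apply: le_Rintegral => // x _.
  have E1 : f1 x - a x = MM c eta x - vv c eta x (hpred h x) by rewrite /f1 /a; ring.
  have E2 : f2 x - a x = MM c eta x - \sum_(i < n.+1) vv c eta x i * softmax h x i.
    by rewrite /f2 /a; ring.
  rewrite E1 E2; apply: key_ineq.
  - by move=> i; exact: vv_leMM.
  - by move=> i; exact/ltW/sm_gt0.
  - exact: sm_sum.
  - by move=> i; apply: sm_le; exact: hpred_max.
lra.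
Qed.
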